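(* Let $D$ be a restricted double extended meta-interpreter, $P$ a definite program, $Q_0$ an atomic query of the language of $P$, and $v_1,\dots,v_n$ terms such that the query $\mathit{solve}(Q_0,v_1,\dots,v_n)$ is restricted. Then for every call $\mathit{solve}(Q,u_1,\dots,u_n)\in\mathrm{Call}(D\cup\mathit{ce}^D(P),\mathit{solve}(Q_0,v_1,\dots,v_n))$ and every (renamed apart) clause $\mathit{solve}(H,t_1,\dots,t_n)\leftarrow B_1,\dots,B_k$ of $D$, the sequence $(u_1,\dots,u_n)$ is unifiable with $(t_1,\dots,t_n)$.
   Context: Logic programs are definite; LD-derivations use the leftmost selection rule. $\mathrm{Call}(P,S)$ is the set of atoms $A$ such that a variant of $A$ is a selected atom in some branch of the LD-tree of $P\cup\{Q\}$ for some $Q\in S$. $\mathit{Vars}_n$ denotes the set of linear sequences (all variables distinct) of $n$ free variables. A double extended meta-interpreter is a definite program consisting of three clauses of the form $\mathit{solve}(\mathit{true},t_{11},\dots,t_{1n})\leftarrow C_{11},\dots,C_{1m_1}.$ $\mathit{solve}((A,B),t_{21},\dots,t_{2n})\leftarrow D_{11},\dots,D_{1k_1},\mathit{solve}(A,t_{31},\dots,t_{3n}),D_{21},\dots,D_{2k_2},\mathit{solve}(B,t_{41},\dots,t_{4n}),C_{21},\dots,C_{2m_2}.$ $\mathit{solve}(A,t_{51},\dots,t_{5n})\leftarrow D_{31},\dots,D_{3k_3},\mathit{clause}(A,B,s_1,\dots,s_k),D_{41},\dots,D_{4k_4},\mathit{solve}(B,t_{61},\dots,t_{6n}),C_{31},\dots,C_{3m_3}.$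 where $A,B$ are variables (the meta-variables), together with clauses defining the other predicates in the $C_{kl},D_{pq}$, none of which contain $\mathit{solve}$ or $\mathit{clause}$. A clause body $B_1,\dots,B_m$ is encoded as the term $(B_1,(B_2,\dots,B_m))$ with functor $,/2$, an empty body as $\mathit{true}$; $\mathit{ce}^D(P)$ is a set of facts $\mathit{clause}(H,B,s_1,\dots,s_k)$ with exactly one such fact for each clause $H\leftarrow B$ of $P$ and no others. The symbols $,/2$, $\mathit{clause}$, $\mathit{solve}$ do not occur in the language of $P$. $D$ is restricted if: (i) for any computed answer of the preceding atoms in the clause, either the corresponding instances of $(t_{31},\dots,t_{3n})$, $(t_{41},\dots,t_{4n})$, $(t_{61},\dots,t_{6n})$ and $(s_1,\dots,s_k)$ are linear sequences of free variables, or $(t_{11},\dots,t_{1n})$, $(t_{21},\dots,t_{2n})$, $(t_{51},\dots,t_{5n})$ are linear sequences of free variables and for every program $P$ and every $\mathit{clause}(s,t,t_1,\dots,t_k)\in\mathit{ce}^D(P)$, $(t_1,\dots,t_k)$ is a linear sequence of free variables; (ii) for all $P$, all $Q$ and all terms $t_1,\dots,t_n$, no call to any $C_{kl}$ or $D_{pq}$ in $\mathrm{Call}(D\cup\mathit{ce}^D(P),\mathit{solve}(Q,t_1,\dots,t_n))$ fails; (iii) for every $i$, every instance $(D_{i1},\dots,D_{ik_i})\theta$ and every computed answer substitution $\sigma$ for it, $A\theta\sigma$ is identical to $A\theta$ and $B\theta\sigma$ is identical to $B\theta$. Given a restricted $D$, a query $\mathit{solve}(Q,v_1,\dots,v_n)$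 is restricted if either $(v_1,\dots,v_n)\in\mathit{Vars}_n$, or $(t_{11},\dots,t_{1n}),(t_{21},\dots,t_{2n}),(t_{51},\dots,t_{5n})\in\mathit{Vars}_n$. *)

(* Defs.v *)
From Stdlib Require Import List Arith.
Import ListNotations.
Set Implicit Arguments.

(* Terms and atoms.  A function/predicate symbol is a name (nat); its   *)
(* arity is the length of the argument list.  Atoms are terms [Fn p l]. *)
Inductive term : Type :=
| Var (x : nat)
| Fn (f : nat) (args : list term).

Definition subst_t := nat -> term.

Fixpoint subst (s : subst_t) (t : term) : term :=
  match t with
  | Var x => s x
  | Fn f ts => Fn f (map (subst s) ts)
  end.

Fixpoint vars (t : term) : list nat :=
  match t with
  | Var x => [x]
  | Fn _ ts => flat_map vars ts
  end.

Definition varsl (ts : list term) : list nat := flat_map vars ts.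

Fixpoint syms (t : term) : list (nat * nat) :=
  match t with
  | Var _ => []
  | Fn f ts => (f, length ts) :: flat_map syms ts
  end.

(* composition: first theta, then sigma *)
Definition comp (theta sigma : subst_t) : subst_t :=
  fun x => subst sigma (theta x).

Definition disjoint (l1 l2 : list nat) : Prop :=
  forall x, In x l1 -> ~ In x l2.

Definition is_varseq (n : nat) (ts : list term) : Prop :=
  length ts = n /\ (forall t, In t ts -> exists x, t = Var x) /\ NoDup ts.

Definition comma_sym : nat := 0.
Definition true_sym : nat := 1.
Definition solve_sym : nat := 2.
Definition clause_sym : nat := 3.

Definition true_t : term := Fn true_sym [].
Definition comma_t (a b : term) : term := Fn comma_sym [a; b].
Definition solve_at (A : term) (ts : list term) : term := Fn solve_sym (A :: ts).
Definition clause_at (A B : term) (ss : list term) : term :=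
  Fn clause_sym (A :: B :: ss).

Definition no_solve_clause (t : term) : Prop :=
  forall m, ~ In (solve_sym, m) (syms t) /\ ~ In (clause_sym, m) (syms t).

Definition object_term (t : term) : Prop :=
  ~ In (comma_sym, 2) (syms t) /\ no_solve_clause t.

Definition is_atom (t : term) : Prop := exists f ts, t = Fn f ts.

Definition clause : Type := (term * list term)%type.   (* head <- body *)
Definition program : Type := list clause.

Definition vars_cl (c : clause) : list nat := vars (fst c) ++ varsl (snd c).

Definition cl_inst (s : subst_t) (c : clause) : clause :=
  (subst s (fst c), map (subst s) (snd c)).

Definition variant (a b : term) : Prop :=
  exists s r, subst s a = b /\ subst r b = a.

Definition variant_cl (c d : clause) : Prop :=
  exists s r, cl_inst s c = d /\ cl_inst r d = c.

Definition object_program (P : program) : Prop :=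
  forall c, In c P ->
    is_atom (fst c) /\ object_term (fst c) /\
    forall b, In b (snd c) -> is_atom b /\ object_term b.

Fixpoint enc_body (bs : list term) : term :=
  match bs with
  | [] => true_t
  | [b] => b
  | b :: bs' => comma_t b (enc_body bs')
  end.

Definition unifier (s : subst_t) (a b : term) : Prop := subst s a = subst s b.

Definition mgu (theta : subst_t) (a b : term) : Prop :=
  unifier theta a b /\
  forall s, unifier s a b -> exists d, forall x, s x = subst d (theta x).

Inductive ld_step (P : program) : list term -> list term -> subst_t -> Prop :=
| ld_step_intro (A : term) (G : list term) (c : clause) (H : term)
    (B : list term) (theta : subst_t) :
    In c P -> variant_cl c (H, B) ->
    disjoint (vars_cl (H, B)) (varsl (A :: G)) ->
    mgu theta A H ->
    ld_step P (A :: G) (map (subst theta) (B ++ G)) theta.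

Inductive ld_derivn (P : program) : nat -> list term -> list term -> subst_t -> Prop :=
| ldn_refl (G : list term) : ld_derivn P 0 G G Var
| ldn_step (n : nat) (G G1 G2 : list term) (theta sigma : subst_t) :
    ld_step P G G1 theta -> ld_derivn P n G1 G2 sigma ->
    ld_derivn P (S n) G G2 (comp theta sigma).

Definition ld_deriv (P : program) (G G' : list term) (theta : subst_t) : Prop :=
  exists n, ld_derivn P n G G' theta.

Definition comp_answer (P : program) (G : list term) (sigma : subst_t) : Prop :=
  exists theta, ld_deriv P G [] theta /\
    forall x, (In x (varsl G) -> sigma x = theta x) /\
              (~ In x (varsl G) -> sigma x = Var x).

(* finite failure: the LD-tree is finite (bounded depth) without success *)
Definition finitely_fails (P : program) (G : list term) : Prop :=
  (exists N, forall n G' theta, ld_derivn P n G G' theta -> n <= N) /\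
  ~ (exists theta, ld_deriv P G [] theta).

Definition call_set (P : program) (Q : list term) (A : term) : Prop :=
  exists A' G theta, ld_deriv P Q (A' :: G) theta /\ variant A A'.

Record demi : Type := Demi {
  dn : nat;                 (* number n of extra arguments of solve *)
  dk : nat;                 (* number k of extra arguments of clause *)
  (* solve(true, t1) <- C1 *)
  tt1 : list term; CC1 : list term;
  (* solve((A,B), t2) <- D1, solve(A,t3), D2, solve(B,t4), C2 *)
  a2 : nat; b2 : nat;
  tt2 : list term; DD1 : list term; tt3 : list term; DD2 : list term;
  tt4 : list term; CC2 : list term;
  (* solve(A, t5) <- D3, clause(A,B,s), D4, solve(B,t6), C3 *)
  a3 : nat; b3 : nat;
  tt5 : list term; DD3 : list term; ss : list term; DD4 : list term;
  tt6 : list term; CC3 : list term;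
  (* clauses defining the other predicates *)
  aux : program;
  (* the extra arguments s_1..s_k of the fact of ce^D(P) for clause c of P *)
  ce_args : program -> clause -> list term
}.

Definition cl1 (D : demi) : clause := (solve_at true_t (tt1 D), CC1 D).
Definition cl2 (D : demi) : clause :=
  (solve_at (comma_t (Var (a2 D)) (Var (b2 D))) (tt2 D),
   DD1 D ++ [solve_at (Var (a2 D)) (tt3 D)] ++ DD2 D ++
   [solve_at (Var (b2 D)) (tt4 D)] ++ CC2 D).
Definition cl3 (D : demi) : clause :=
  (solve_at (Var (a3 D)) (tt5 D),
   DD3 D ++ [clause_at (Var (a3 D)) (Var (b3 D)) (ss D)] ++ DD4 D ++
   [solve_at (Var (b3 D)) (tt6 D)] ++ CC3 D).

Definition solve_clauses (D : demi) : program := [cl1 D; cl2 D; cl3 D].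

Definition ce (D : demi) (P : program) : program :=
  map (fun c => (clause_at (fst c) (enc_body (snd c)) (ce_args D P c), [])) P.

Definition prog (D : demi) (P : program) : program :=
  solve_clauses D ++ aux D ++ ce D P.

Definition cd_atoms (D : demi) : list term :=
  CC1 D ++ CC2 D ++ CC3 D ++ DD1 D ++ DD2 D ++ DD3 D ++ DD4 D.

Definition is_demi (D : demi) : Prop :=
  length (tt1 D) = dn D /\ length (tt2 D) = dn D /\ length (tt3 D) = dn D /\
  length (tt4 D) = dn D /\ length (tt5 D) = dn D /\ length (tt6 D) = dn D /\
  length (ss D) = dk D /\
  (forall P c, length (ce_args D P c) = dk D) /\
  a2 D <> b2 D /\ a3 D <> b3 D /\
  (forall C, In C (cd_atoms D) -> is_atom C /\ no_solve_clause C) /\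
  (forall c, In c (aux D) ->
     is_atom (fst c) /\ no_solve_clause (fst c) /\
     forall b, In b (snd c) -> is_atom b /\ no_solve_clause b).

(* body atoms of solve clauses that are not solve/clause atoms, i.e. the
   C_kl, D_pq *)
Definition not_solve_clause_atom (t : term) : Prop :=
  match t with
  | Fn f _ => f <> solve_sym /\ f <> clause_sym
  | Var _ => True
  end.

Definition args_free_after (D : demi) (c : clause) (pre ts : list term) (m : nat) : Prop :=
  forall P Q w theta sigma,
    is_varseq (dn D) w ->
    disjoint (varsl (Q :: w)) (vars_cl c) ->
    mgu theta (solve_at Q w) (fst c) ->
    comp_answer (prog D P) (map (subst theta) pre) sigma ->
    is_varseq m (map (fun t => subst sigma (subst theta t)) ts).

Definition restricted_i (D : demi) : Prop :=
  (args_free_after D (cl2 D) (DD1 D) (tt3 D) (dn D) /\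
   args_free_after D (cl2 D)
     (DD1 D ++ [solve_at (Var (a2 D)) (tt3 D)] ++ DD2 D) (tt4 D) (dn D) /\
   args_free_after D (cl3 D) (DD3 D) (ss D) (dk D) /\
   args_free_after D (cl3 D)
     (DD3 D ++ [clause_at (Var (a3 D)) (Var (b3 D)) (ss D)] ++ DD4 D)
     (tt6 D) (dn D))
  \/
  (is_varseq (dn D) (tt1 D) /\ is_varseq (dn D) (tt2 D) /\
   is_varseq (dn D) (tt5 D) /\
   forall P c, In c P -> is_varseq (dk D) (ce_args D P c)).

(* A call to the body atom
   C of (a variant of) a solve clause, used at goal S :: R with mgu theta,
   is C theta sigma where sigma is a computed answer of the instance of the
   atoms preceding C. *)
Definition restricted_ii (D : demi) : Prop :=
  forall P Q ts, length ts = dn D ->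
  forall S0 R theta0 c H B theta pre C post sigma,
    ld_deriv (prog D P) [solve_at Q ts] (S0 :: R) theta0 ->
    In c (solve_clauses D) -> variant_cl c (H, B) ->
    disjoint (vars_cl (H, B)) (varsl (S0 :: R)) ->
    mgu theta S0 H ->
    B = pre ++ C :: post -> not_solve_clause_atom C ->
    comp_answer (prog D P) (map (subst theta) pre) sigma ->
    ~ finitely_fails (prog D P) [subst sigma (subst theta C)].

Definition preserves_meta (D : demi) (Ds : list term) (a b : nat) : Prop :=
  forall P theta sigma,
    comp_answer (prog D P) (map (subst theta) Ds) sigma ->
    subst sigma (theta a) = theta a /\ subst sigma (theta b) = theta b.

Definition restricted_iii (D : demi) : Prop :=
  preserves_meta D (DD1 D) (a2 D) (b2 D) /\
  preserves_meta D (DD2 D) (a2 D) (b2 D) /\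
  preserves_meta D (DD3 D) (a3 D) (b3 D) /\
  preserves_meta D (DD4 D) (a3 D) (b3 D).

Definition restricted (D : demi) : Prop :=
  restricted_i D /\ restricted_ii D /\ restricted_iii D.

Definition restricted_query (D : demi) (v : list term) : Prop :=
  is_varseq (dn D) v \/
  (is_varseq (dn D) (tt1 D) /\ is_varseq (dn D) (tt2 D) /\
   is_varseq (dn D) (tt5 D)).

(* Main.v *)
Require Import Defs.
From Stdlib Require Import List Arith Lia.
Import ListNotations.

Fixpoint term_ind' (P : term -> Prop) (HV : forall x, P (Var x))
  (HF : forall f l, Forall P l -> P (Fn f l)) (t : term) : P t :=
  match t with
  | Var x => HV x
  | Fn f l => HF f l ((fix go (l : list term) : Forall P l :=
       match l with [] => Forall_nil _ | t :: l' => Forall_cons _ (term_ind' P HV HF t) (go l') end) l)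
  end.

Lemma subst_ext s1 s2 t : (forall x, In x (vars t) -> s1 x = s2 x) -> subst s1 t = subst s2 t.
Proof.
  induction t using term_ind'; simpl; intros Hx.
  - apply Hx; auto.
  - f_equal. induction H; simpl; auto.
    simpl in Hx. f_equal.
    + apply H. intros y Hy; apply Hx; apply in_or_app; auto.
    + apply IHForall. intros y Hy; apply Hx; apply in_or_app; auto.
Qed.

Lemma map_subst_ext s1 s2 l : (forall x, In x (varsl l) -> s1 x = s2 x) ->
  map (subst s1) l = map (subst s2) l.
Proof.
  induction l; simpl; intros; auto. f_equal.
  - apply subst_ext; intros; apply H; apply in_or_app; auto.
  - apply IHl; intros; apply H; apply in_or_app; auto.
Qed.

Lemma subst_comp s1 s2 t : subst s2 (subst s1 t) = subst (comp s1 s2) t.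
Proof.
  induction t using term_ind'; simpl; auto.
  f_equal. rewrite map_map. induction H; simpl; auto. f_equal; auto.
Qed.

Lemma map_subst_comp s1 s2 l : map (subst s2) (map (subst s1) l) = map (subst (comp s1 s2)) l.
Proof. rewrite map_map. apply map_ext. intros; apply subst_comp. Qed.

Lemma subst_id t : subst Var t = t.
Proof.
  induction t using term_ind'; simpl; auto. f_equal. induction H; simpl; auto. f_equal; auto.
Qed.

Lemma vars_subst s t z : In z (vars (subst s t)) <-> exists x, In x (vars t) /\ In z (vars (s x)).
Proof.
  induction t using term_ind'; simpl.
  - split. intros; exists x; auto. intros [y [[<-|[]] H]]; auto.
  - rewrite in_flat_map. split.
    + intros [u [Hu Hz]]. apply in_map_iff in Hu. destruct Hu as [t [<- Ht]].
      rewrite Forall_forall in H. apply H in Hz; auto. destruct Hz as [x [Hx Hz]].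
      exists x; split; auto. apply in_flat_map; eauto.
    + intros [x [Hx Hz]]. apply in_flat_map in Hx. destruct Hx as [t [Ht Hx]].
      exists (subst s t); split. apply in_map; auto.
      rewrite Forall_forall in H. apply H; eauto.
Qed.

Lemma varsl_map s l z : In z (varsl (map (subst s) l)) <-> exists x, In x (varsl l) /\ In z (vars (s x)).
Proof.
  unfold varsl. rewrite in_flat_map. split.
  - intros [u [Hu Hz]]. apply in_map_iff in Hu. destruct Hu as [t [<- Ht]].
    apply vars_subst in Hz. destruct Hz as [x [Hx Hz]]. exists x; split; auto. apply in_flat_map; eauto.
  - intros [x [Hx Hz]]. apply in_flat_map in Hx. destruct Hx as [t [Ht Hx]].
    exists (subst s t); split. apply in_map; auto. apply vars_subst; eauto.
Qed.

Lemma varsl_app l1 l2 : varsl (l1 ++ l2) = varsl l1 ++ varsl l2.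
Proof. unfold varsl; apply flat_map_app. Qed.

Lemma varsl_cons a l : varsl (a :: l) = vars a ++ varsl l.
Proof. reflexivity. Qed.

Lemma subst_fix s t : subst s t = t -> forall x, In x (vars t) -> s x = Var x.
Proof.
  induction t using term_ind'; simpl; intros E y Hy.
  - destruct Hy as [<-|[]]; auto.
  - injection E as E. apply in_flat_map in Hy. destruct Hy as [u [Hu Hy]].
    rewrite Forall_forall in H. eapply H; eauto.
    clear - E Hu. induction l; simpl in *; [destruct Hu|]. injection E as E1 E2.
    destruct Hu as [->|Hu]; auto.
Qed.

Lemma subst_inv s r t : subst r (subst s t) = t -> forall x, In x (vars t) ->
  exists z, s x = Var z /\ r z = Var x.
Proof.
  intros E x Hx. rewrite subst_comp in E. pose proof (subst_fix _ _ E x Hx) as H.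
  unfold comp in H. destruct (s x) eqn:Es; simpl in H. eauto. discriminate.
Qed.

Lemma mgu_outside th A H x : mgu th A H -> ~ In x (vars A) -> ~ In x (vars H) ->
  exists z, th x = Var z /\ forall y, y <> x -> ~ In z (vars (th y)).
Proof.
  intros [Hu Hg] HA HH.
  set (k := fun v => if Nat.eqb v x then Var (S x) else Var v).
  set (s := fun v => if Nat.eqb v x then Var x else subst k (th v)).
  assert (Hk : forall t, ~ In x (vars (subst k t))).
  { intros t Ht. apply vars_subst in Ht. destruct Ht as [v [_ Hv]]. unfold k in Hv.
    destruct (Nat.eqb_spec v x); simpl in Hv; destruct Hv as [Hv|[]]; lia. }
  assert (Hs : unifier s A H).
  { unfold unifier in *.
    rewrite (subst_ext s (comp th k) A), (subst_ext s (comp th k) H).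
    - rewrite <- !subst_comp, Hu; auto.
    - intros v Hv. unfold s, comp. destruct (Nat.eqb_spec v x); subst; tauto.
    - intros v Hv. unfold s, comp. destruct (Nat.eqb_spec v x); subst; tauto. }
  destruct (Hg s Hs) as [d Hd].
  pose proof (Hd x) as Hx. unfold s in Hx. rewrite Nat.eqb_refl in Hx.
  destruct (th x) as [z|] eqn:Ez; simpl in Hx; [|discriminate].
  exists z; split; auto. intros y Hy Hz.
  pose proof (Hd y) as Hy'. unfold s in Hy'. apply Nat.eqb_neq in Hy. rewrite Hy in Hy'.
  apply (Hk (th y)). rewrite Hy'. apply vars_subst. exists z; split; auto. rewrite <- Hx; simpl; auto.
Qed.

Inductive cder (P : program) : list term -> list term -> list term -> subst_t -> nat -> Prop :=
| cder0 R : cder P [] R R Var 0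
| cderS A G1 R c H B th R2 rho k : In c P -> variant_cl c (H, B) ->
    disjoint (vars_cl (H, B)) (varsl (A :: G1 ++ R)) -> mgu th A H ->
    cder P (map (subst th) (B ++ G1)) (map (subst th) R) R2 rho k ->
    cder P (A :: G1) R R2 (comp th rho) (S k).

Lemma cder_final P G R R2 rho k : cder P G R R2 rho k -> R2 = map (subst rho) R.
Proof.
  induction 1. rewrite map_ext with (g := fun t => t). symmetry; apply map_id. apply subst_id.
  rewrite IHcder, map_subst_comp; auto.
Qed.

Lemma cder_alone P G R R2 rho k : cder P G R R2 rho k -> ld_derivn P k G [] rho.
Proof.
  induction 1. constructor.
  econstructor; [|eauto]. replace (map (subst th) (B ++ G1)) with (map (subst th) (B ++ G1))by auto.
  econstructor; eauto. intros x Hx Hy. apply (H2 x Hx).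
  rewrite varsl_cons, varsl_app in *. apply in_app_or in Hy. apply in_or_app.
  destruct Hy; auto. right; apply in_or_app; auto.
Qed.

Lemma ld_split P n G R X tau : ld_derivn P n (G ++ R) X tau ->
  (exists G', G' <> [] /\ ld_derivn P n G G' tau /\ X = G' ++ map (subst tau) R) \/
  (exists k rho R2 tau', k <= n /\ cder P G R R2 rho k /\ ld_derivn P (n - k) R2 X tau' /\
     forall x, tau x = subst tau' (rho x)).
Proof.
  revert G R X tau. induction n; intros G R X tau Hd.
  - inversion Hd; subst. destruct G as [|A G].
    + right. exists 0, Var, R, Var. repeat split; auto; constructor.
    + left. exists (A :: G). repeat split; try discriminate. constructor.
      f_equal. rewrite map_ext with (g := fun t => t). symmetry; apply map_id. apply subst_id.
  - destruct G as [|A G].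
    + right. exists 0, Var, R, tau. repeat split; auto; try lia. constructor.
    + inversion Hd as [|? ? G1 ? th sg Hs Hd2]; subst.
      inversion Hs as [A0 G0 c H0 B th0 Hcl Hv Hdis Hm]; subst.
      rewrite app_assoc, map_app in Hd2.
      destruct (IHn _ _ _ _ Hd2) as [[G' [Hne [Hd' ->]]]|[k [rho [R2 [tau' [Hk [Hc [Hr Ht]]]]]]]].
      * left. exists G'. repeat split; auto.
        -- econstructor; [|eauto]. econstructor; eauto. intros x Hx Hy. apply (Hdis x Hx).
           rewrite varsl_cons, varsl_app in *. apply in_app_or in Hy. apply in_or_app.
           destruct Hy; auto. right; apply in_or_app; auto.
        -- f_equal. apply map_subst_comp.
      * right. exists (S k), (comp th rho), R2, tau'. repeat split; try lia.
        -- econstructor; eauto.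
        -- simpl. auto.
        -- intros x. unfold comp. rewrite subst_comp.
           apply subst_ext. intros; apply Ht.
Qed.

Definition inT (G R : list term) x := In x (varsl R) /\ ~ In x (varsl G).

Lemma inT_dec G R x : {inT G R x} + {~ inT G R x}.
Proof.
  unfold inT. destruct (in_dec Nat.eq_dec x (varsl R)); destruct (in_dec Nat.eq_dec x (varsl G)); tauto.
Qed.

Lemma cder_inv P G R R2 rho k : cder P G R R2 rho k ->
  (forall x, inT G R x -> exists z, rho x = Var z) /\
  (forall x1 x2, inT G R x1 -> inT G R x2 -> rho x1 = rho x2 -> x1 = x2) /\
  (forall x y z, inT G R x -> ~ inT G R y -> rho x = Var z -> ~ In z (vars (rho y))).
Proof.
  induction 1.
  - repeat split.
    + eauto.
    + intros x1 x2 _ _ E; injection E; auto.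
    + intros x y z Hx Hy E. injection E as <-. simpl. intros [->|[]]; auto.
  - destruct IHcder as [I1 [I2 I3]].
    assert (Tz : forall x, inT (A :: G1) R x -> exists z, th x = Var z /\
              inT (map (subst th) (B ++ G1)) (map (subst th) R) z /\
              forall y, y <> x -> ~ In z (vars (th y))).
    { intros x [HxR HxG].
      assert (HxH : ~ In x (vars_cl (H, B))).
      { intros Hc. apply (H2 x Hc). rewrite varsl_cons, varsl_app. apply in_or_app; right; apply in_or_app; auto. }
      destruct (mgu_outside th A H x H3) as [z [Ez Hz]].
      { intros Hc; apply HxG; rewrite varsl_cons; apply in_or_app; auto. }
      { intros Hc; apply HxH; unfold vars_cl; apply in_or_app; auto. }
      exists z; repeat split; auto.
      - apply varsl_map. exists x; split; auto. rewrite Ez; simpl; auto.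
      - intros Hc. apply varsl_map in Hc. destruct Hc as [y [Hy Hzy]].
        assert (y <> x).
        { intros ->. rewrite varsl_app in Hy. apply in_app_or in Hy. destruct Hy.
          - apply HxH. unfold vars_cl; apply in_or_app; auto.
          - apply HxG. rewrite varsl_cons; apply in_or_app; auto. }
        eapply Hz; eauto. }
    repeat split.
    + intros x Hx. destruct (Tz x Hx) as [z [Ez [Hz _]]]. unfold comp. rewrite Ez; simpl. auto.
    + intros x1 x2 Hx1 Hx2 E. destruct (Tz x1 Hx1) as [z1 [Ez1 [Hz1 N1]]].
      destruct (Tz x2 Hx2) as [z2 [Ez2 [Hz2 N2]]]. unfold comp in E. rewrite Ez1, Ez2 in E. simpl in E.
      pose proof (I2 _ _ Hz1 Hz2 E) as ->.
      destruct (Nat.eq_dec x1 x2); auto. exfalso. apply (N1 x2); auto. rewrite Ez2; simpl; auto.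
    + intros x y z' Hx Hy E. destruct (Tz x Hx) as [z [Ez [Hz N]]].
      unfold comp in *. rewrite Ez in E; simpl in E.
      intros Hc. apply vars_subst in Hc. destruct Hc as [w [Hw Hzw]].
      assert (w <> z). { intros ->. apply (N y); auto. intros ->. auto. }
      destruct (inT_dec (map (subst th) (B ++ G1)) (map (subst th) R) w) as [Tw|Tw].
      * destruct (I1 w Tw) as [w' Ew]. rewrite Ew in Hzw. simpl in Hzw. destruct Hzw as [<-|[]].
        apply H5. apply (I2 _ _ Tw Hz). congruence.
      * eapply I3; eauto.
Qed.

Lemma varseq_ctx P G R R2 rho k sg m L : cder P G R R2 rho k ->
  is_varseq m (map (subst sg) L) ->
  (forall x, In x (varsl L) -> In x (varsl G) \/ In x (varsl R)) ->
  (forall x, In x (varsl G) -> sg x = rho x) ->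
  (forall x, ~ In x (varsl G) -> sg x = Var x) ->
  is_varseq m (map (subst rho) L).
Proof.
  intros Hc [Hlen [Hv Hnd]] HL Hin Hout.
  destruct (cder_inv _ _ _ _ _ _ Hc) as [I1 [I2 I3]].
  assert (HV : forall l, In l L -> exists x, l = Var x /\ In x (varsl L)).
  { intros l Hl. destruct (Hv (subst sg l)) as [y Hy]. apply in_map; auto.
    destruct l as [x|]; [|discriminate]. exists x; split; auto.
    apply in_flat_map. exists (Var x); simpl; auto. }
  assert (Hrv : forall x, In x (varsl L) -> exists z, rho x = Var z).
  { intros x Hx. destruct (in_dec Nat.eq_dec x (varsl G)).
    - rewrite <- Hin; auto. destruct (HL x Hx) as [H1|H1]; [|].
      + apply in_flat_map in Hx. destruct Hx as [l [Hl Hx]]. destruct (HV l Hl) as [x' [-> _]].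
        simpl in Hx. destruct Hx as [<-|[]]. destruct (Hv (subst sg (Var x'))) as [y Hy].
        apply in_map; auto. eauto.
      + apply in_flat_map in Hx. destruct Hx as [l [Hl Hx]]. destruct (HV l Hl) as [x' [-> _]].
        simpl in Hx. destruct Hx as [<-|[]]. destruct (Hv (subst sg (Var x'))) as [y Hy].
        apply in_map; auto. eauto.
    - apply I1. split; auto. destruct (HL x Hx); tauto. }
  repeat split.
  - rewrite length_map in *; auto.
  - intros t Ht. apply in_map_iff in Ht. destruct Ht as [l [<- Hl]].
    destruct (HV l Hl) as [x [-> Hx]]. simpl. eauto.
  - assert (Hsub : forall l, In l L -> forall x, In x (vars l) -> In x (varsl L)).
    { intros l Hl x Hx. apply in_flat_map; eauto. }
    clear Hlen Hv. induction L as [|l L IH]; cbn [map] in *. constructor.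
    inversion Hnd; subst. constructor.
    + intros Hc'. apply in_map_iff in Hc'. destruct Hc' as [l' [E Hl']].
      apply H1. apply in_map_iff. exists l'; split; auto.
      destruct (HV l (or_introl eq_refl)) as [x [-> Hx]].
      destruct (HV l' (or_intror Hl')) as [x' [-> Hx']]. simpl in *.
      assert (Hx2 : In x' (varsl (Var x :: L))).
      { apply in_flat_map. exists (Var x'); simpl; auto. }
      destruct (in_dec Nat.eq_dec x (varsl G)); destruct (in_dec Nat.eq_dec x' (varsl G)).
      * rewrite !Hin; auto.
      * exfalso. destruct (I1 x') as [z' Ez']. split; auto. destruct (HL x' Hx2); tauto.
        apply (I3 x' x z'); auto. split; auto. destruct (HL x' Hx2); tauto.
        intros [_ C]; auto. rewrite <- E, Ez'; simpl; auto.
      * exfalso. destruct (I1 x) as [z Ez]. split; auto. destruct (HL x Hx); tauto.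
        apply (I3 x x' z); auto. split; auto. destruct (HL x Hx); tauto.
        intros [_ C]; auto. rewrite E, Ez; simpl; auto.
      * assert (x = x'). apply I2; auto.
        split; auto. destruct (HL x Hx); tauto. split; auto. destruct (HL x' Hx2); tauto.
        subst; auto.
    + apply IH; auto.
      * intros x Hx. destruct (HL x); auto. rewrite varsl_cons; apply in_or_app; auto.
      * intros l' Hl'. destruct (HV l' (or_intror Hl')) as [x [-> Hx]]. exists x; split; auto.
        apply in_flat_map. exists (Var x); simpl; auto.
      * intros x Hx. apply Hrv. rewrite varsl_cons; apply in_or_app; auto.
      * intros l' Hl' x Hx. apply in_flat_map; eauto.
Qed.

Definition good (p : nat -> nat -> Prop) (a : term) := exists f args, a = Fn f args /\ p f (length args).

Lemma good_subst p s a : good p a -> good p (subst s a).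
Proof. intros [f [args [-> H]]]. simpl. exists f, (map (subst s) args). rewrite length_map; auto. Qed.

Lemma Forall_good_map p s l : Forall (good p) l -> Forall (good p) (map (subst s) l).
Proof. intros H. apply Forall_map. eapply Forall_impl; [|eauto]. intros; apply good_subst; auto. Qed.

Lemma derivn_good p Pr :
  (forall c, In c Pr -> exists f args, fst c = Fn f args) ->
  (forall c, In c Pr -> forall f args, fst c = Fn f args -> p f (length args) -> Forall (good p) (snd c)) ->
  forall n G X th, ld_derivn Pr n G X th -> Forall (good p) G -> Forall (good p) X.
Proof.
  intros Hh Hb. induction 1; auto. intros HG. apply IHld_derivn.
  inversion H as [A0 G0 c Hd B th0 Hcl Hv Hdis Hm]; subst. inversion HG as [|? ? [f [a [-> Hp]]] HG0]; subst.
  destruct Hv as [s [r [E _]]]. destruct (Hh c Hcl) as [f' [a' Ef]].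
  unfold cl_inst in E. injection E as EH EB. rewrite Ef in EH. simpl in EH. subst Hd B.
  destruct Hm as [Hu _]. unfold unifier in Hu. simpl in Hu. injection Hu as -> Hl.
  assert (length a = length a') by (apply (f_equal (@length _)) in Hl; rewrite !length_map in Hl; auto).
  rewrite map_app. apply Forall_app; split.
  - apply Forall_good_map. apply Forall_good_map. eapply Hb; eauto. congruence.
  - apply Forall_good_map; auto.
Qed.

Definition NSp (f n : nat) : Prop := f <> solve_sym.
Definition LIp (D : demi) (f n : nat) : Prop := f = solve_sym -> n = S (dn D).

Lemma atom_ns b : is_atom b -> no_solve_clause b -> good NSp b.
Proof.
  intros [f [ts ->]] Hn. exists f, ts; split; auto. intros ->.
  destruct (Hn (length ts)) as [H _]. apply H; simpl; auto.
Qed.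

Lemma in_prog D P c : In c (prog D P) ->
  c = cl1 D \/ c = cl2 D \/ c = cl3 D \/ In c (aux D) \/
  exists c0, In c0 P /\ c = (clause_at (fst c0) (enc_body (snd c0)) (ce_args D P c0), []).
Proof.
  unfold prog. intros H. apply in_app_or in H. destruct H as [H|H].
  - simpl in H. intuition.
  - apply in_app_or in H. destruct H as [H|H]; auto.
    unfold ce in H. apply in_map_iff in H. destruct H as [c0 [<- H]]. right; right; right; right; eauto.
Qed.

Lemma prog_heads D P : is_demi D -> forall c, In c (prog D P) -> exists f args, fst c = Fn f args.
Proof.
  intros HD c Hc. destruct (in_prog _ _ _ Hc) as [->|[->|[->|[Ha|[c0 [_ ->]]]]]]; simpl; unfold solve_at, clause_at; eauto.
  destruct HD as [_ [_ [_ [_ [_ [_ [_ [_ [_ [_ [_ Hx]]]]]]]]]]]. destruct (Hx c Ha) as [[f [a E]] _]; eauto.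
Qed.

Lemma prog_ns D P : is_demi D -> forall c, In c (prog D P) -> forall f args, fst c = Fn f args ->
  NSp f (length args) -> Forall (good NSp) (snd c).
Proof.
  intros HD c Hc f args Ef Hp. destruct (in_prog _ _ _ Hc) as [->|[->|[->|[Ha|[c0 [_ ->]]]]]];
    simpl in Ef; unfold solve_at, clause_at in Ef; try (injection Ef; intros; subst; unfold NSp in Hp; congruence).
  - destruct HD as [_ [_ [_ [_ [_ [_ [_ [_ [_ [_ [_ Hx]]]]]]]]]]]. destruct (Hx c Ha) as [_ [_ Hb]].
    apply Forall_forall. intros b Hb'. apply atom_ns; apply Hb; auto.
  - simpl; auto.
Qed.

Lemma ns_li D a : good NSp a -> good (LIp D) a.
Proof. intros [f [args [-> H]]]. exists f, args; split; auto. intros E; contradiction. Qed.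

Lemma prog_li D P : is_demi D -> forall c, In c (prog D P) -> forall f args, fst c = Fn f args ->
  LIp D f (length args) -> Forall (good (LIp D)) (snd c).
Proof.
  intros HD c Hc _ _ _ _.
  assert (Hcd : Forall (good (LIp D)) (cd_atoms D)).
  { apply Forall_forall. intros C HC. apply ns_li. apply atom_ns; apply HD; auto. }
  destruct HD as [_ [_ [L3 [L4 [_ [L6 [_ [_ [_ [_ [_ Hx]]]]]]]]]]].
  unfold cd_atoms in Hcd. repeat rewrite Forall_app in Hcd.
  destruct Hcd as [F1 [F2 [F3 [F4 [F5 [F6 F7]]]]]].
  assert (Hs : forall A ts, length ts = dn D -> good (LIp D) (solve_at A ts)).
  { intros A ts Hl. exists solve_sym, (A :: ts); split; auto. intros _; simpl; auto. }
  destruct (in_prog _ _ _ Hc) as [->|[->|[->|[Ha|[c0 [_ ->]]]]]]; simpl.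
  - auto.
  - repeat (first [apply Forall_app; split | constructor]); auto.
  - repeat (first [apply Forall_app; split | constructor]); auto.
    exists clause_sym, (Var (a3 D) :: Var (b3 D) :: ss D); split; auto. intros E; discriminate.
  - destruct (Hx c Ha) as [_ [_ Hb]]. apply Forall_forall. intros b Hb'. apply ns_li, atom_ns; apply Hb; auto.
  - auto.
Qed.

Lemma le_list_max z l : In z l -> z <= list_max l.
Proof. intros H. pose proof (proj1 (list_max_le l (list_max l)) (le_n _)). rewrite Forall_forall in H0; auto. Qed.

Lemma vars_cl_inst s r c H' B' : cl_inst s c = (H', B') -> cl_inst r (H', B') = c ->
  forall x, In x (vars_cl c) -> exists z, s x = Var z /\ r z = Var x /\ In z (vars_cl (H', B')).
Proof.
  intros E1 E2 x Hx. destruct c as [h b]. unfold cl_inst in *. simpl in *.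
  injection E1 as E1a E1b. injection E2 as E2a E2b.
  assert (Ht : subst r (subst s (Fn 0 (h :: b))) = Fn 0 (h :: b)).
  { simpl. rewrite E1a, E2a. f_equal. f_equal. rewrite E1b. auto. }
  destruct (subst_inv _ _ _ Ht x Hx) as [z [Ez Er]]. exists z; repeat split; auto.
  assert (In z (vars (subst s (Fn 0 (h :: b))))). { apply vars_subst. exists x; rewrite Ez; simpl; auto. }
  simpl in H. rewrite E1a, E1b in H. exact H.
Qed.

Lemma varseq_shift n M l : is_varseq n l -> is_varseq n (map (subst (fun y => Var (y + M))) l).
Proof.
  intros [Hl [Hv Hnd]]. repeat split.
  - rewrite length_map; auto.
  - intros t Ht. apply in_map_iff in Ht. destruct Ht as [t' [<- Ht']].
    destruct (Hv t' Ht') as [y ->]. simpl. eauto.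
  - clear Hl. induction l as [|a u IH]; simpl; constructor.
    + inversion Hnd; subst. intros Hc. apply H1. apply in_map_iff in Hc. destruct Hc as [b [Eb Hb]].
      destruct (Hv a (or_introl eq_refl)) as [ya ->]. destruct (Hv b (or_intror Hb)) as [yb ->].
      simpl in Eb. injection Eb as Eb. replace ya with yb by lia. auto.
    + inversion Hnd; subst. apply IH; auto. intros t Ht; apply Hv; simpl; auto.
Qed.

Lemma transfer D P c pre tt m s r H' B' Q' u' th R R2 rho k :
  args_free_after D c pre tt m ->
  cl_inst s c = (H', B') -> cl_inst r (H', B') = c ->
  is_varseq (dn D) u' ->
  disjoint (vars_cl (H', B')) (varsl [solve_at Q' u']) ->
  mgu th (solve_at Q' u') H' ->
  (forall x, In x (varsl pre) -> In x (vars_cl c)) ->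
  (forall x, In x (varsl tt) -> In x (vars_cl c)) ->
  cder (prog D P) (map (subst th) (map (subst s) pre)) R R2 rho k ->
  (forall x, In x (varsl (map (subst th) (map (subst s) tt))) ->
     In x (varsl (map (subst th) (map (subst s) pre))) \/ In x (varsl R)) ->
  is_varseq m (map (subst rho) (map (subst th) (map (subst s) tt))).
Proof.
  intros Haf E1 E2 Hu Hdis Hm Hpre Htt Hcd Hsub.
  set (QU := solve_at Q' u').
  assert (HdisQ : forall y, In y (vars QU) -> ~ In y (vars_cl (H', B'))).
  { intros y Hy Hc. apply (Hdis y Hc). unfold varsl; simpl; rewrite app_nil_r; auto. }
  set (Vimg := flat_map (fun y => vars (th y)) (vars_cl (H', B') ++ vars QU)).
  set (M := S (list_max (Vimg ++ vars_cl c))).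
  assert (HM1 : forall y z, In y (vars_cl (H', B') ++ vars QU) -> In z (vars (th y)) -> z < M).
  { intros y z Hy Hz. unfold M. apply le_n_S. apply le_list_max. apply in_or_app; left.
    apply in_flat_map; eauto. }
  assert (HM2 : forall x, In x (vars_cl c) -> x < M).
  { intros x Hx. unfold M. apply le_n_S. apply le_list_max. apply in_or_app; auto. }
  clearbody M. clear Vimg.
  set (pi := fun y => Var (y + M)).
  set (theta := fun x => if in_dec Nat.eq_dec x (vars_cl c) then subst th (s x)
                 else if andb (Nat.leb M x) (if in_dec Nat.eq_dec (x - M) (vars QU) then true else false)
                 then th (x - M) else Var (x + M)).
  assert (Hth_c : forall t, (forall x, In x (vars t) -> In x (vars_cl c)) ->
             subst theta t = subst th (subst s t)).
  { intros t Ht. rewrite subst_comp. apply subst_ext. intros x Hx. unfold theta, comp.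
    destruct (in_dec Nat.eq_dec x (vars_cl c)); auto. exfalso; auto. }
  assert (Hth_pi : forall t, (forall x, In x (vars t) -> In x (vars QU)) ->
             subst theta (subst pi t) = subst th t).
  { intros t Ht. rewrite subst_comp. apply subst_ext. intros x Hx. unfold theta, comp, pi. simpl.
    destruct (in_dec Nat.eq_dec (x + M) (vars_cl c)) as [Hc|Hc].
    { apply HM2 in Hc. lia. }
    replace (x + M - M) with x by lia.
    replace (Nat.leb M (x + M)) with true by (symmetry; apply Nat.leb_le; lia). simpl.
    destruct (in_dec Nat.eq_dec x _); [reflexivity| exfalso; auto]. }
  assert (Hmgu : mgu theta (subst pi QU) (fst c)).
  { destruct Hm as [Hun Hmg]. split.
    - unfold unifier. rewrite Hth_pi; auto. rewrite Hth_c.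
      + destruct c as [hc bc]. unfold cl_inst in E1. simpl in *. injection E1 as -> _. auto.
      + intros x Hx. unfold vars_cl; apply in_or_app; auto.
    - intros s2 Hs2.
      set (s2' := fun y => if in_dec Nat.eq_dec y (vars_cl (H', B')) then subst s2 (r y)
                   else if in_dec Nat.eq_dec y (vars QU) then s2 (y + M) else Var y).
      assert (Hs2' : unifier s2' QU H').
      { unfold unifier in *.
        transitivity (subst s2 (subst pi QU)).
        { rewrite subst_comp. apply subst_ext. intros y Hy. unfold s2', comp, pi; simpl.
          destruct (in_dec Nat.eq_dec y (vars_cl (H', B'))) as [Hc|Hc]. exfalso; eapply HdisQ; eauto.
          destruct (in_dec Nat.eq_dec y _) as [|Hn]; [reflexivity|exfalso; apply Hn; exact Hy]. }
        rewrite Hs2.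
        assert (EH : subst r H' = fst c).
        { destruct c as [hc bc]. unfold cl_inst in E2. simpl in *. injection E2; auto. }
        rewrite <- EH, subst_comp. apply subst_ext. intros y Hy. unfold s2', comp.
        destruct (in_dec Nat.eq_dec y (vars_cl (H', B'))) as [Hc|Hc]; auto.
        exfalso; apply Hc; unfold vars_cl; apply in_or_app; auto. }
      destruct (Hmg s2' Hs2') as [d' Hd'].
      exists (fun z => if Nat.ltb z M then d' z else s2 (z - M)).
      assert (Hlow : forall y, In y (vars_cl (H', B') ++ vars QU) ->
                subst (fun z => if Nat.ltb z M then d' z else s2 (z - M)) (th y) = s2' y).
      { intros y Hy. rewrite Hd'. apply subst_ext. intros z Hz.
        replace (Nat.ltb z M) with true; auto. symmetry; apply Nat.ltb_lt; eauto. }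
      intros x. unfold theta.
      destruct (in_dec Nat.eq_dec x (vars_cl c)) as [Hc|Hc].
      + destruct (vars_cl_inst _ _ _ _ _ E1 E2 x Hc) as [z [Ez [Er Hz]]].
        rewrite Ez. simpl. rewrite Hlow by (apply in_or_app; auto). unfold s2'.
        destruct (in_dec Nat.eq_dec z (vars_cl (H', B'))); [|tauto]. rewrite Er; auto.
      + destruct (in_dec Nat.eq_dec (x - M) (vars QU)) as [Hq|Hq];
        destruct (Nat.leb_spec M x) as [Hle|Hle]; simpl.
        * rewrite Hlow by (apply in_or_app; auto). unfold s2'.
          destruct (in_dec Nat.eq_dec (x - M) (vars_cl (H', B'))). exfalso; eapply HdisQ; eauto.
          destruct (in_dec Nat.eq_dec (x - M) (vars QU)); [|tauto]. f_equal; lia.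
        * replace (Nat.ltb (x + M) M) with false. f_equal; lia. symmetry; apply Nat.ltb_ge; lia.
        * replace (Nat.ltb (x + M) M) with false. f_equal; lia. symmetry; apply Nat.ltb_ge; lia.
        * replace (Nat.ltb (x + M) M) with false. f_equal; lia. symmetry; apply Nat.ltb_ge; lia. }
  set (Gp := map (subst th) (map (subst s) pre)).
  set (sg := fun x => if in_dec Nat.eq_dec x (varsl Gp) then rho x else Var x).
  assert (Hca : comp_answer (prog D P) (map (subst theta) pre) sg).
  { replace (map (subst theta) pre) with Gp.
    - exists rho. split. exists k. eapply cder_alone; eauto.
      intros x; unfold sg; destruct (in_dec Nat.eq_dec x (varsl Gp)); tauto.
    - unfold Gp. rewrite map_subst_comp. apply map_ext_in. intros t Ht. rewrite Hth_c, subst_comp; auto.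
      intros x Hx. apply Hpre. apply in_flat_map; eauto. }
  assert (Hw : is_varseq (dn D) (map (subst pi) u')) by (apply varseq_shift; auto).
  assert (Hdw : disjoint (varsl (subst pi Q' :: map (subst pi) u')) (vars_cl c)).
  { intros x Hx Hc. apply HM2 in Hc.
    assert (Hx' : In x (vars (subst pi QU))). { unfold QU, solve_at. simpl. exact Hx. }
    apply vars_subst in Hx'. destruct Hx' as [y [_ Hy]]. unfold pi in Hy. simpl in Hy. lia. }
  assert (HQU : subst pi QU = solve_at (subst pi Q') (map (subst pi) u')) by reflexivity.
  rewrite HQU in Hmgu.
  pose proof (Haf P (subst pi Q') (map (subst pi) u') theta sg Hw Hdw Hmgu Hca) as Hres.
  replace (map (fun t => subst sg (subst theta t)) tt) with
    (map (subst sg) (map (subst th) (map (subst s) tt))) in Hres.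
  - eapply varseq_ctx; eauto.
    + intros x Hx. unfold sg. destruct (in_dec Nat.eq_dec x (varsl Gp)); tauto.
    + intros x Hx. unfold sg. destruct (in_dec Nat.eq_dec x (varsl Gp)); tauto.
  - rewrite map_subst_comp, map_map. apply map_ext_in. intros t Ht.
    rewrite Hth_c; [rewrite !subst_comp; reflexivity|]. intros x Hx. apply Htt. apply in_flat_map; eauto.
Qed.

Lemma cd_ns D : is_demi D -> Forall (good NSp) (cd_atoms D).
Proof. intros HD. apply Forall_forall. intros C HC. apply atom_ns; apply HD; auto. Qed.

Lemma ns_contra D P n G X tau Q' u' rest : is_demi D -> Forall (good NSp) G ->
  ld_derivn (prog D P) n G X tau -> X = solve_at Q' u' :: rest -> False.
Proof.
  intros HD HG Hd ->. eapply derivn_good in Hd; eauto.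
  - inversion Hd as [|? ? [f [a [E Hp]]]]; subst. injection E as <- _. apply Hp; auto.
  - apply prog_heads; auto.
  - apply prog_ns; auto.
Qed.

Lemma ns_map s l : Forall (good NSp) l -> Forall (good NSp) (map (subst s) l).
Proof. apply Forall_good_map. Qed.

Lemma in_vars_cl_body c x t : In t (snd c) -> In x (vars t) -> In x (vars_cl c).
Proof. intros Ht Hx. unfold vars_cl. apply in_or_app; right. apply in_flat_map; eauto. Qed.

Lemma varsl_sub l1 l2 x : (forall t, In t l1 -> In t l2) -> In x (varsl l1) -> In x (varsl l2).
Proof. intros H Hx. apply in_flat_map in Hx. destruct Hx as [t [Ht Hx]]. apply in_flat_map; eauto. Qed.

Ltac inb := let t := fresh "t" in let Ht := fresh "Ht" in
  intros t Ht; rewrite ?in_app_iff in *; simpl in *; rewrite ?in_app_iff in *; simpl in *; tauto.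

Lemma mainT D P : is_demi D ->
  args_free_after D (cl2 D) (DD1 D) (tt3 D) (dn D) ->
  args_free_after D (cl2 D) (DD1 D ++ [solve_at (Var (a2 D)) (tt3 D)] ++ DD2 D) (tt4 D) (dn D) ->
  args_free_after D (cl3 D) (DD3 D ++ [clause_at (Var (a3 D)) (Var (b3 D)) (ss D)] ++ DD4 D) (tt6 D) (dn D) ->
  forall n Q w X tau, is_varseq (dn D) w -> ld_derivn (prog D P) n [solve_at Q w] X tau ->
  forall Q' u' rest, X = solve_at Q' u' :: rest -> is_varseq (dn D) u'.
Proof.
  intros HD A3 A4 A6 n. induction n as [n IH] using (well_founded_induction lt_wf).
  intros Q w X tau Hw Hd Q' u' rest EX.
  pose proof (cd_ns D HD) as Hcd0. unfold cd_atoms in Hcd0. rewrite !Forall_app in Hcd0.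
  destruct Hcd0 as [N1 [N2 [N3 [N4 [N5 [N6 N7]]]]]].
  destruct n as [|m].
  { subst X. inversion Hd; subst; auto. }
  inversion Hd as [|? ? G1 ? th sg Hs Hd2]; subst.
  inversion Hs as [A0 G0 c H' B' th0 Hc Hv Hdis Hm]; subst.
  pose proof Hv as [s [r [E1 E2]]].
  assert (HB' : B' = map (subst s) (snd c)) by (destruct c; unfold cl_inst in E1; injection E1; auto).
  assert (HH' : H' = subst s (fst c)) by (destruct c; unfold cl_inst in E1; injection E1; auto).
  rewrite app_nil_r in Hd2.
  destruct (in_prog _ _ _ Hc) as [->|[->|[->|[Ha|[c0 [_ ->]]]]]].
  -
    exfalso. eapply ns_contra; [exact HD| |exact Hd2|exact eq_refl].
    rewrite HB'. apply ns_map, ns_map. exact N1.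
  -
    set (Sa := solve_at (Var (a2 D)) (tt3 D)). set (Sb := solve_at (Var (b2 D)) (tt4 D)).
    set (pre4 := DD1 D ++ [Sa] ++ DD2 D).
    assert (Hbody : snd (cl2 D) = pre4 ++ ([Sb] ++ CC2 D)).
    { unfold pre4, cl2. simpl. rewrite <- !app_assoc. reflexivity. }
    rewrite HB', Hbody, !map_app in Hd2.
    destruct (ld_split _ _ _ _ _ _ Hd2) as [[G' [Hne [HdG' EX']]] | [k [rho [R2 [tau' [Hk [Hcd [Hr Ht]]]]]]]].
    +
      destruct G' as [|g G'']; [congruence|]. injection EX' as Eg _.
      unfold pre4 in HdG'. rewrite !map_app in HdG'.
      destruct (ld_split _ _ _ _ _ _ HdG') as [[G3 [Hne3 [HdG3 EX3]]] | [k [rho [R2 [tau' [Hk [Hcd [Hr Ht]]]]]]]].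
      * exfalso. destruct G3 as [|g3 G3]; [congruence|]. injection EX3 as Eg3 _.
        eapply ns_contra; [exact HD| |exact HdG3|]. apply ns_map, ns_map; exact N4.
        subst; reflexivity.
      * pose proof (cder_final _ _ _ _ _ _ Hcd) as ER2. subst R2.
        rewrite !map_app in Hr.
        destruct (ld_split _ _ _ _ _ _ Hr) as [[G4 [Hne4 [HdG4 EX4]]] | [k' [rho' [R3 [tau'' [Hk' [Hcd' [Hr' Ht']]]]]]]].
        -- destruct G4 as [|g4 G4]; [congruence|]. injection EX4 as Eg4 _.
           assert (Hw' : is_varseq (dn D) (map (subst rho) (map (subst th) (map (subst s) (tt3 D))))).
           { eapply (transfer D P (cl2 D) (DD1 D) (tt3 D) (dn D) s r H' B' Q w th); eauto.
             - intros x Hx. unfold vars_cl. apply in_or_app; right. eapply varsl_sub; [|exact Hx].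
               rewrite Hbody. unfold pre4. inb.
             - intros x Hx. apply (in_vars_cl_body _ x Sa). rewrite Hbody. unfold pre4. rewrite ?in_app_iff; simpl; tauto.
               simpl. right. exact Hx.
             - intros x Hx. right. apply in_flat_map. exists (subst th (subst s Sa)). split.
               simpl. left; reflexivity. unfold Sa, Sb, solve_at. simpl. apply in_or_app; right. exact Hx. }
           eapply (IH (m - k)); [lia| exact Hw' | exact HdG4 | ]. subst; reflexivity.
        -- exfalso. pose proof (cder_final _ _ _ _ _ _ Hcd') as ER3. subst R3.
           eapply ns_contra; [exact HD| |exact Hr'|]. apply ns_map, ns_map, ns_map, ns_map; exact N5.
           subst; reflexivity.
    + pose proof (cder_final _ _ _ _ _ _ Hcd) as ER2. subst R2.
      rewrite !map_app in Hr.
      destruct (ld_split _ _ _ _ _ _ Hr) as [[G4 [Hne4 [HdG4 EX4]]] | [k' [rho' [R3 [tau'' [Hk' [Hcd' [Hr' Ht']]]]]]]].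
      * destruct G4 as [|g4 G4]; [congruence|]. injection EX4 as Eg4 _.
        assert (Hw' : is_varseq (dn D) (map (subst rho) (map (subst th) (map (subst s) (tt4 D))))).
        { eapply (transfer D P (cl2 D) pre4 (tt4 D) (dn D) s r H' B' Q w th); eauto.
          - intros x Hx. unfold vars_cl. apply in_or_app; right. eapply varsl_sub; [|exact Hx].
            rewrite Hbody. inb.
          - intros x Hx. apply (in_vars_cl_body _ x Sb). rewrite Hbody. rewrite ?in_app_iff; simpl; tauto.
            simpl. right. exact Hx.
          - intros x Hx. right. apply in_flat_map. exists (subst th (subst s Sb)). split.
            simpl. left; reflexivity. unfold Sa, Sb, solve_at. simpl. apply in_or_app; right. exact Hx. }
        eapply (IH (m - k)); [lia| exact Hw' | exact HdG4 | ]. subst; reflexivity.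
      * exfalso. pose proof (cder_final _ _ _ _ _ _ Hcd') as ER3. subst R3.
        eapply ns_contra; [exact HD| |exact Hr'|reflexivity]. apply ns_map, ns_map, ns_map, ns_map; exact N2.
  -
    set (Cl := clause_at (Var (a3 D)) (Var (b3 D)) (ss D)). set (Sb := solve_at (Var (b3 D)) (tt6 D)).
    set (pre6 := DD3 D ++ [Cl] ++ DD4 D).
    assert (Hbody : snd (cl3 D) = pre6 ++ ([Sb] ++ CC3 D)).
    { unfold pre6, cl3. simpl. rewrite <- !app_assoc. reflexivity. }
    assert (Npre : Forall (good NSp) pre6).
    { unfold pre6. repeat (apply Forall_app; split); auto. constructor; auto.
      exists clause_sym, (Var (a3 D) :: Var (b3 D) :: ss D); split; auto. unfold NSp; discriminate. }
    rewrite HB', Hbody, !map_app in Hd2.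
    destruct (ld_split _ _ _ _ _ _ Hd2) as [[G' [Hne [HdG' EX']]] | [k [rho [R2 [tau' [Hk [Hcd [Hr Ht]]]]]]]].
    + exfalso. destruct G' as [|g G'']; [congruence|]. injection EX' as Eg _.
      eapply ns_contra; [exact HD| |exact HdG'|]. apply ns_map, ns_map; exact Npre.
      subst; reflexivity.
    + pose proof (cder_final _ _ _ _ _ _ Hcd) as ER2. subst R2.
      rewrite !map_app in Hr.
      destruct (ld_split _ _ _ _ _ _ Hr) as [[G4 [Hne4 [HdG4 EX4]]] | [k' [rho' [R3 [tau'' [Hk' [Hcd' [Hr' Ht']]]]]]]].
      * destruct G4 as [|g4 G4]; [congruence|]. injection EX4 as Eg4 _.
        assert (Hw' : is_varseq (dn D) (map (subst rho) (map (subst th) (map (subst s) (tt6 D))))).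
        { eapply (transfer D P (cl3 D) pre6 (tt6 D) (dn D) s r H' B' Q w th); eauto.
          - intros x Hx. unfold vars_cl. apply in_or_app; right. eapply varsl_sub; [|exact Hx].
            rewrite Hbody. inb.
          - intros x Hx. apply (in_vars_cl_body _ x Sb). rewrite Hbody. rewrite ?in_app_iff; simpl; tauto.
            simpl. right. exact Hx.
          - intros x Hx. right. apply in_flat_map. exists (subst th (subst s Sb)). split.
            simpl. left; reflexivity. unfold Sb, solve_at. simpl. apply in_or_app; right. exact Hx. }
        eapply (IH (m - k)); [lia| exact Hw' | exact HdG4 | ]. subst; reflexivity.
      * exfalso. pose proof (cder_final _ _ _ _ _ _ Hcd') as ER3. subst R3.
        eapply ns_contra; [exact HD| |exact Hr'|reflexivity]. apply ns_map, ns_map, ns_map, ns_map; exact N3.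
  -
    exfalso. destruct HD as [_ [_ [_ [_ [_ [_ [_ [_ [_ [_ [_ Hx]]]]]]]]]]].
    destruct (Hx c Ha) as [[f [a E]] [Hn _]]. rewrite E in HH'. subst H'.
    destruct Hm as [Hu _]. unfold unifier, solve_at in Hu. simpl in Hu. injection Hu as Ef _.
    rewrite E in Hn. destruct (Hn (length a)) as [Hn' _]. apply Hn'. simpl. left. rewrite <- Ef. auto.
  -
    exfalso. subst H'. destruct Hm as [Hu _]. unfold unifier, solve_at, clause_at in Hu. simpl in Hu.
    discriminate.
Qed.

Lemma unif_varseq a b : (forall t, In t a -> exists x, t = Var x) -> NoDup a -> length a = length b ->
  exists sg, map (subst sg) a = b /\ forall y, ~ In y (varsl a) -> sg y = Var y.
Proof.
  revert b. induction a as [|t a IH]; intros b Hv Hnd Hl; destruct b as [|u b]; try discriminate.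
  - exists Var; split; auto.
  - simpl in Hl. injection Hl as Hl. inversion Hnd; subst.
    destruct (IH b (fun t' H => Hv t' (or_intror H)) H2 Hl) as [sg [E Hsg]].
    destruct (Hv t (or_introl eq_refl)) as [x ->].
    assert (Hx : ~ In x (varsl a)).
    { intros Hc. apply in_flat_map in Hc. destruct Hc as [t' [Ht' Hc]].
      destruct (Hv t' (or_intror Ht')) as [x' ->]. simpl in Hc. destruct Hc as [<-|[]]. auto. }
    exists (fun y => if Nat.eqb y x then u else sg y). split.
    + simpl. rewrite Nat.eqb_refl. f_equal. rewrite <- E. apply map_subst_ext.
      intros y Hy. destruct (Nat.eqb_spec y x); subst; tauto.
    + intros y Hy. destruct (Nat.eqb_spec y x). subst. exfalso; apply Hy; simpl; auto.
      apply Hsg. intros Hc; apply Hy. rewrite varsl_cons; apply in_or_app; auto.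
Qed.

Lemma unif_final n a b : is_varseq n a -> length b = n ->
  (forall x, In x (varsl a) -> ~ In x (varsl b)) ->
  exists sg, map (subst sg) a = map (subst sg) b.
Proof.
  intros [Hl [Hv Hnd]] Hlb Hd. destruct (unif_varseq a b Hv Hnd ltac:(congruence)) as [sg [E Hsg]].
  exists sg. rewrite E. symmetry. rewrite <- (map_id b) at 2. apply map_ext_in.
  intros t Ht. rewrite <- (subst_id t) at 2. apply subst_ext. intros x Hx. apply Hsg.
  intros Hc. apply (Hd x Hc). apply in_flat_map; eauto.
Qed.

Lemma varseq_ren n l s r : is_varseq n l ->
  (forall x, In x (varsl l) -> exists z, s x = Var z /\ r z = Var x) ->
  is_varseq n (map (subst s) l).
Proof.
  intros [Hl [Hv Hnd]] Hsr. repeat split.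
  - rewrite length_map; auto.
  - intros t Ht. apply in_map_iff in Ht. destruct Ht as [t' [<- Ht']].
    destruct (Hv t' Ht') as [y ->]. simpl. destruct (Hsr y) as [z [Ez _]].
    apply in_flat_map. exists (Var y); simpl; auto. eauto.
  - clear Hl. induction l as [|a u IH]; simpl; constructor.
    + inversion Hnd; subst. intros Hc. apply H1. apply in_map_iff in Hc. destruct Hc as [b [Eb Hb]].
      destruct (Hv a (or_introl eq_refl)) as [ya ->]. destruct (Hv b (or_intror Hb)) as [yb ->].
      simpl in Eb.
      destruct (Hsr ya) as [za [Ea Ra]]. simpl; auto.
      destruct (Hsr yb) as [zb [Eb' Rb]]. rewrite varsl_cons. apply in_or_app; right. apply in_flat_map.
      exists (Var yb); simpl; auto.
      rewrite Ea, Eb' in Eb. injection Eb as ->. congruence.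
    + inversion Hnd; subst. apply IH; auto. intros t Ht; apply Hv; simpl; auto.
      intros x Hx. apply Hsr. rewrite varsl_cons; apply in_or_app; auto.
Qed.

Theorem mainTheorem10 (D : demi) (P : program) (Q0 : term) (v : list term) :
  is_demi D -> restricted D ->
  object_program P ->
  is_atom Q0 -> object_term Q0 ->
  length v = dn D ->
  restricted_query D v ->
  forall (Q : term) (u : list term),
    call_set (prog D P) [solve_at Q0 v] (solve_at Q u) ->
    forall (c : clause) (H : term) (ts B : list term),
      In c (solve_clauses D) ->
      variant_cl c (solve_at H ts, B) ->
      disjoint (vars_cl (solve_at H ts, B)) (vars (solve_at Q u)) ->
      exists sigma : subst_t, map (subst sigma) u = map (subst sigma) ts.
Proof.
  intros HD [Hri _] _ _ _ Hlv Hrq Q u [A' [G [th [[n Hd] [s0 [r0 [Es Er]]]]]]] c H ts B Hc Hvar Hdis.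
  assert (Hgood : Forall (good (LIp D)) (A' :: G)).
  { eapply derivn_good; [| |exact Hd|].
    - apply prog_heads; auto.
    - apply prog_li; auto.
    - constructor; [|constructor]. exists solve_sym, (Q0 :: v); split; auto. intros _; simpl; auto. }
  pose proof (Forall_inv Hgood) as [f [args [EA Hp]]].
  rewrite <- Es in EA. unfold solve_at in EA. simpl in EA. injection EA as Ef Eargs.
  assert (Hlu : length u = dn D).
  { rewrite <- Eargs in Hp. simpl in Hp. rewrite length_map in Hp. specialize (Hp (eq_sym Ef)). lia. }
  destruct Hvar as [s [r [E1 E2]]].
  assert (Hts : exists X tt, fst c = solve_at X tt /\ ts = map (subst s) tt /\
                 (tt = tt1 D \/ tt = tt2 D \/ tt = tt5 D)).
  { assert (Hf : subst s (fst c) = solve_at H ts).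
    { destruct c; unfold cl_inst in E1; injection E1; auto. }
    simpl in Hc. destruct Hc as [<-|[<-|[<-|[]]]]; simpl in Hf; unfold solve_at in Hf; simpl in Hf;
      injection Hf as _ Hf; [exists true_t, (tt1 D)|exists (comma_t (Var (a2 D)) (Var (b2 D))), (tt2 D)|exists (Var (a3 D)), (tt5 D)]; repeat split; auto. }
  destruct Hts as [X [tt [Efc [Ets Htt]]]].
  assert (Hlt : length tt = dn D).
  { destruct HD as [L1 [L2 [_ [_ [L5 _]]]]]. destruct Htt as [E|[E|E]]; subst tt; auto. }
  assert (Hdis' : forall x, In x (varsl u) -> ~ In x (varsl ts)).
  { intros x Hx Hx'. apply (Hdis x).
    - unfold vars_cl, solve_at. simpl. apply in_or_app; left. apply in_or_app; right. exact Hx'.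
    - unfold solve_at. simpl. apply in_or_app; right. exact Hx. }
  assert (Easy : is_varseq (dn D) (tt1 D) /\ is_varseq (dn D) (tt2 D) /\ is_varseq (dn D) (tt5 D) ->
           exists sigma : subst_t, map (subst sigma) u = map (subst sigma) ts).
  { intros [V1 [V2 V5]].
    assert (Vt : is_varseq (dn D) tt) by (destruct Htt as [E|[E|E]]; subst tt; auto).
    assert (Vts : is_varseq (dn D) ts).
    { rewrite Ets. apply (varseq_ren _ _ s r Vt). intros x Hx.
      destruct (vars_cl_inst _ _ _ _ _ E1 E2 x) as [z [Ez [Rz _]]]; eauto.
      unfold vars_cl. apply in_or_app; left. rewrite Efc. unfold solve_at. simpl. apply in_or_app; right; exact Hx. }
    destruct (unif_final _ _ _ Vts Hlu) as [sg Hsg].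
    { intros x Hx Hx'. exact (Hdis' x Hx' Hx). }
    exists sg. auto. }
  destruct Hri as [[A3 [A4 [_ A6]]] | HE]; [|apply Easy; tauto].
  destruct Hrq as [Hv | HE]; [|apply Easy; tauto].
  assert (Hu' : is_varseq (dn D) (map (subst s0) u)).
  { eapply (mainT D P HD A3 A4 A6 n Q0 v); eauto. rewrite <- Es. reflexivity. }
  assert (Hu : is_varseq (dn D) u).
  { assert (Eu : map (subst r0) (map (subst s0) u) = u).
    { rewrite <- Es in Er. unfold solve_at in Er. simpl in Er. injection Er; auto. }
    rewrite <- Eu. apply (varseq_ren _ _ r0 s0 Hu'). intros y Hy.
    apply (subst_inv r0 s0 A').
    - rewrite Er, Es. reflexivity.
    - rewrite <- Es. unfold solve_at. simpl. apply in_or_app; right. exact Hy. }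
  destruct (unif_final _ _ _ Hu (eq_trans (f_equal (@length _) Ets) (eq_trans (length_map _ _) Hlt)) Hdis') as [sg Hsg].
  exists sg; auto.
Qed.
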